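(* Let $A$ and $B$ be disjoint cubic graphs with $v(A)\equiv 0\pmod 6$ and $v(B)\equiv 4\pmod 6$, let $a=a_1a_2\in E(A)$, $x\in V(B)$, and $b=b_1b_2\in E(B)$. Suppose $A$ has no $\Lambda$-factor containing $a$, and $B-x$ has no $\Lambda$-factor avoiding $b$ (so $x$ is not incident to $b$). Let $G=AabB$. Then $v(G)\equiv 4\pmod 6$ and $G-x$ has no $\Lambda$-factor.
   Context: Graphs are finite, undirected, without loops or multiple edges; $v(G)=|V(G)|$. For disjoint graphs $A,B$ with $a=a_1a_2\in E(A)$, $b=b_1b_2\in E(B)$, $AabB$ is obtained from $(A-a)\cup(B-b)$ (edge deletions) by adding the new edges $a_1b_1$ and $a_2b_2$. $G-x$ denotes deletion of the vertex $x$. A $\Lambda$-factor of a graph is a spanning subgraph each of whose components is a path on 3 vertices; it avoids an edge $e$ if $e$ is not one of its edges. *)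

(* Defs.v *)
From mathcomp Require Import all_boot.
Set Implicit Arguments. Unset Strict Implicit. Unset Printing Implicit Defensive.

Definition simple_graph (T : finType) (e : rel T) : Prop :=
  symmetric e /\ irreflexive e.

Definition cubic (T : finType) (e : rel T) : Prop :=
  forall v : T, #|[set w | e v w]| = 3.

(* F is a Lambda-factor of the graph (S, e) (the subgraph of e induced on the
   vertex set S): F is a (symmetric) set of edges of G[S], spanning S, such that
   every component of (S, F) is a path u - w - z on 3 vertices. *)
Definition is_Lambda_factor (T : finType) (e : rel T) (S : {set T}) (F : rel T) : Prop :=
  symmetric F /\
  (forall u v, F u v -> [&& e u v, u \in S & v \in S]) /\
  (forall v, v \in S ->
     exists u w z, [/\ [&& u != w, w != z & u != z],
                       [set y | connect F v y] = [set u; w; z],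
                       F u w, F w z & ~~ F u z]).

Definition join_graph (TA TB : finType) (eA : rel TA) (eB : rel TB)
  (a1 a2 : TA) (b1 b2 : TB) : rel (TA + TB) :=
  fun u v =>
    match u, v with
    | inl x, inl y => eA x y && ~~ (((x == a1) && (y == a2)) || ((x == a2) && (y == a1)))
    | inr x, inr y => eB x y && ~~ (((x == b1) && (y == b2)) || ((x == b2) && (y == b1)))
    | inl x, inr y => ((x == a1) && (y == b1)) || ((x == a2) && (y == b2))
    | inr y, inl x => ((x == a1) && (y == b1)) || ((x == a2) && (y == b2))
    end.

(* Main.v *)
Require Import Defs.
From mathcomp Require Import all_boot zify.
Set Implicit Arguments. Unset Strict Implicit. Unset Printing Implicit Defensive.

Definition comp (T : finType) (F : rel T) (v : T) := [set y | connect F v y].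

Definition P3 (T : finType) (F : rel T) u w z :=
  [/\ [&& u != w, w != z & u != z], F u w, F w z, ~~ F u z &
   forall y, (F u y -> y = w) /\ (F w y -> y = u \/ y = z) /\ (F z y -> y = w)].

Lemma P3_of_comp (T : finType) (F : rel T) : symmetric F -> irreflexive F ->
  forall v u w z, [&& u != w, w != z & u != z] -> comp F v = [set u; w; z] ->
  F u w -> F w z -> ~~ F u z -> P3 F u w z.
Proof.
move=> Fsym Firr v u w z d C Fuw Fwz nFuz; split=> // y.
have Hc: forall t, t \in [set u; w; z] -> F t y -> y \in [set u; w; z].
  move=> t; rewrite -C !inE => ct Fty; exact: connect_trans ct (connect1 Fty).
have Hu : u \in [set u; w; z] by rewrite !inE eqxx.
have Hw : w \in [set u; w; z] by rewrite !inE eqxx orbT.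
have Hz : z \in [set u; w; z] by rewrite !inE eqxx !orbT.
split; [|split].
- move=> Fuy; move: (Hc _ Hu Fuy); rewrite !inE => /orP[/orP[/eqP E|/eqP E]|/eqP E] //.
    by rewrite E Firr in Fuy.
  by rewrite -E Fuy in nFuz.
- move=> Fwy; move: (Hc _ Hw Fwy); rewrite !inE => /orP[/orP[/eqP E|/eqP E]|/eqP E]; auto.
  by rewrite E Firr in Fwy.
- move=> Fzy; move: (Hc _ Hz Fzy); rewrite !inE => /orP[/orP[/eqP E|/eqP E]|/eqP E] //.
    by rewrite -E Fsym Fzy in nFuz.
  by rewrite E Firr in Fzy.
Qed.

Lemma comp_of_P3 (T : finType) (F : rel T) : symmetric F ->
  forall u w z, P3 F u w z -> forall v, v \in [set u; w; z] -> comp F v = [set u; w; z].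
Proof.
move=> Fsym u w z [d Fuw Fwz _ N] v vin.
have csym := sym_connect_sym Fsym.
have cl : closed F [set u; w; z].
  apply: intro_closed => // a b Fab; rewrite !inE => /orP[/orP[/eqP E|/eqP E]|/eqP E]; subst a.
  - by rewrite ((N b).1 Fab) eqxx orbT.
  - by case: ((N b).2.1 Fab) => ->; rewrite eqxx ?orbT.
  - by rewrite ((N b).2.2 Fab) eqxx orbT.
have cw : forall t, t \in [set u; w; z] -> connect F w t.
  move=> t; rewrite !inE => /orP[/orP[/eqP->|/eqP->]|/eqP->].
  - by apply: connect1; rewrite Fsym.
  - exact: connect0.
  - exact: connect1.
apply/setP=> y; rewrite inE; apply/idP/idP.
- by move=> cvy; rewrite -(closed_connect cl cvy).
- move=> yin; apply: connect_trans (cw _ yin); rewrite csym; exact: cw.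
Qed.

Lemma factor_of_local (T : finType) (e : rel T) (S : {set T}) (F : rel T) :
  symmetric F -> (forall u v, F u v -> [&& e u v, u \in S & v \in S]) ->
  (forall v, v \in S -> exists u w z, P3 F u w z /\ v \in [set u; w; z]) ->
  is_Lambda_factor e S F.
Proof.
move=> Fsym Fe H; split=> //; split=> // v vS.
have [u [w [z [P vin]]]] := H v vS.
exists u, w, z; have := comp_of_P3 Fsym P vin; case: P => d Fuw Fwz nFuz _ C.
by split.
Qed.

Lemma local_of_factor (T : finType) (e : rel T) (S : {set T}) (F : rel T) :
  irreflexive e -> is_Lambda_factor e S F ->
  forall v, v \in S -> exists u w z, P3 F u w z /\ comp F v = [set u; w; z].
Proof.
move=> eirr [Fsym [Fe H]] v vS.
have Firr : irreflexive F.
  by move=> t; apply/negP => /Fe; rewrite eirr.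
have [u [w [z [d C Fuw Fwz nFuz]]]] := H v vS.
exists u, w, z; split=> //; exact: (P3_of_comp Fsym Firr (v:=v)).
Qed.

Lemma count3 (T : finType) (F : rel T) (D : {set T}) : symmetric F ->
  (forall y, y \in D -> #|[set t in D | connect F y t]| = 3) -> 3 %| #|D|.
Proof.
move=> Fsym H.
have csym := sym_connect_sym Fsym.
have eqR : {in D & &, equivalence_rel (connect F)}.
  move=> a b c _ _ _; split; first exact: connect0.
  move=> cab; apply/idP/idP => h.
  - by apply: connect_trans h; rewrite csym.
  - exact: connect_trans cab h.
rewrite (card_partition (equivalence_partitionP eqR)).
rewrite (eq_bigr (fun _ => 3)); last by move=> A /imsetP[y Dy ->]; exact: H.
by rewrite sum_nat_const dvdn_mull.
Qed.

Lemma P3_map (T1 T2 : finType) (f : T1 -> T2) (finj : injective f) (G : rel T1) (F : rel T2) u w z :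
  (forall t y, t \in [:: u; w; z] -> G t y = F (f t) (f y)) ->
  P3 F (f u) (f w) (f z) -> P3 G u w z.
Proof.
move=> H [d Fuw Fwz nFuz N].
have Hu : u \in [:: u; w; z] by rewrite !inE eqxx.
have Hw : w \in [:: u; w; z] by rewrite !inE eqxx orbT.
have Hz : z \in [:: u; w; z] by rewrite !inE eqxx !orbT.
rewrite !(inj_eq finj) in d.
split; rewrite ?H //.
move=> y; split; [|split]; rewrite H // => h.
- by apply: finj; apply: (N _).1.
- by case: ((N _).2.1 h) => /finj; auto.
- by apply: finj; apply: (N _).2.2.
Qed.

Definition isl (TA TB : Type) (y : TA + TB) := if y is inl _ then true else false.
Notation Lset TA TB := [set y : TA + TB | isl y].

Lemma card_Lset (TA TB : finType) : #|Lset TA TB| = #|TA|.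
Proof.
have -> : Lset TA TB = inl @: [set: TA].
  apply/setP=> [[p|q]]; rewrite !inE /=.
  - by apply/esym/imsetP; exists p; rewrite ?inE.
  - by apply/esym/imsetP => [[p _]].
rewrite card_imset ?cardsT //; by move=> p q [].
Qed.

Section Main.
Variables (TA TB : finType) (eA : rel TA) (eB : rel TB) (a1 a2 : TA) (b1 b2 : TB) (x : TB).
Variable e : rel (TA + TB).
Hypothesis eirr : irreflexive e.
Hypothesis eL : forall p q, e (inl p) (inl q) -> eA p q.
Hypothesis eR : forall p q, e (inr p) (inr q) -> eB p q.
Hypothesis eRb : ~~ e (inr b1) (inr b2).
Hypothesis eX : forall p q, e (inl p) (inr q) -> ((p == a1) && (q == b1)) || ((p == a2) && (q == b2)).
Hypothesis ha : a1 != a2.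
Hypothesis hb : b1 != b2.
Variable F : rel (TA + TB).
Hypothesis FL : is_Lambda_factor e [set~ inr x] F.

Local Notation S := [set~ (inr x : TA + TB)].
Local Notation L := (Lset TA TB).

Lemma Fsym : symmetric F. Proof. by case: FL. Qed.
Lemma Fe u v : F u v -> [&& e u v, u \in S & v \in S]. Proof. by case: FL => _ [H _]; apply: H. Qed.
Lemma Firr : irreflexive F. Proof. by move=> t; apply/negP => /Fe; rewrite eirr. Qed.
Lemma csym : connect_sym F. Proof. exact: sym_connect_sym Fsym. Qed.
Lemma inlS p : inl p \in S. Proof. by rewrite !inE. Qed.

Lemma FX p q : F (inl p) (inr q) -> ((p == a1) && (q == b1)) || ((p == a2) && (q == b2)).
Proof. by move/Fe/andP=> [/eX]. Qed.

Lemma loc v : v \in S -> exists u w z, P3 F u w z /\ comp F v = [set u; w; z].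
Proof. exact: local_of_factor eirr FL v. Qed.

Lemma comp3 v : v \in S -> #|comp F v| = 3.
Proof.
move=> /loc [u [w [z [[d _ _ _ _] ->]]]].
case/and3P: d => d1 d2 d3.
by rewrite -setUA cardsU1 cards2 !inE d2 negb_or d1 d3.
Qed.

Lemma comp_self v : v \in comp F v. Proof. by rewrite inE connect0. Qed.
Lemma compF v y : F v y -> y \in comp F v. Proof. by rewrite inE => /connect1. Qed.
Lemma comp_eq v y : y \in comp F v -> comp F y = comp F v.
Proof.
rewrite inE => cvy; apply/setP=> t; rewrite !inE.
by rewrite (same_connect csym cvy).
Qed.
Lemma has_nb v : v \in S -> exists t, F v t.
Proof.
move=> /loc [u [w [z [[d Fuw Fwz _ _] C]]]].
have : v \in comp F v := comp_self v.
rewrite C !inE => /orP[/orP[/eqP->|/eqP->]|/eqP->].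
- by exists w.
- by exists u; rewrite Fsym.
- by exists w; rewrite Fsym.
Qed.

Definition c1 := F (inl a1) (inr b1).
Definition c2 := F (inl a2) (inr b2).

Lemma crossedge t1 t2 : F t1 t2 -> isl t1 != isl t2 ->
  (c1 && ((t1 == inl a1) || (t2 == inl a1))) || (c2 && ((t1 == inl a2) || (t2 == inl a2))).
Proof.
case: t1 => [p|q]; case: t2 => [p'|q'] //= Ft _.
- have := FX Ft; case/orP=> /andP[/eqP ep /eqP eq]; subst.
  + by rewrite /c1 Ft eqxx.
  + by rewrite /c2 Ft eqxx orbT.
- move: Ft; rewrite Fsym => Ft.
  have := FX Ft; case/orP=> /andP[/eqP ep /eqP eq]; subst.
  + by rewrite /c1 Ft eqxx.
  + by rewrite /c2 Ft eqxx orbT.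
Qed.

Lemma mixed v p q : v \in S -> inl p \in comp F v -> inr q \in comp F v ->
  (c1 && (inl a1 \in comp F v)) || (c2 && (inl a2 \in comp F v)).
Proof.
move=> /loc [u [w [z [[d Fuw Fwz _ _] C]]]]; rewrite C => hp hq.
have inC : forall t1 t2, t1 \in [set u; w; z] -> t2 \in [set u; w; z] -> F t1 t2 -> isl t1 != isl t2 ->
   (c1 && (inl a1 \in [set u; w; z])) || (c2 && (inl a2 \in [set u; w; z])).
  move=> t1 t2 h1 h2 Ft dt; case/orP: (crossedge Ft dt) => /andP[-> /orP[/eqP E|/eqP E]];
  by rewrite -E ?h1 ?h2 ?orbT.
have Hu : u \in [set u; w; z] by rewrite !inE eqxx.
have Hw : w \in [set u; w; z] by rewrite !inE eqxx orbT.
have Hz : z \in [set u; w; z] by rewrite !inE eqxx !orbT.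
case: (boolP (isl u != isl w)) => [|/negPn/eqP e1]; first exact: inC Fuw.
case: (boolP (isl w != isl z)) => [|/negPn/eqP e2]; first exact: inC Fwz.
exfalso.
have all_same : forall t, t \in [set u; w; z] -> isl t = isl w.
  by move=> t; rewrite !inE => /orP[/orP[/eqP->|/eqP->]|/eqP->].
by move: (all_same _ hp) (all_same _ hq) => /= <-.
Qed.

Lemma getl (t : TA + TB) : isl t -> exists p, t = inl p.
Proof. by case: t => // p; exists p. Qed.
Lemma getr (t : TA + TB) : ~~ isl t -> exists q, t = inr q.
Proof. by case: t => // q; exists q. Qed.
Lemma inL_S y : y \in L -> y \in S.
Proof. by case: y => [p _|q]; [exact: inlS | rewrite inE]. Qed.

Definition M := [set y | (c1 && connect F (inl a1) y) || (c2 && connect F (inl a2) y)].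

Lemma M_conn t y : connect F t y -> (t \in M) = (y \in M).
Proof. by move=> cty; rewrite !inE !(same_connect_r csym cty). Qed.

Lemma D_closed y t : y \in L :\: M -> connect F y t -> t \in L :\: M.
Proof.
move=> /setDP[yL yM] cyt; apply/setDP; split; last by rewrite -(M_conn cyt).
case: t cyt => [p|q] cyt; first by rewrite inE.
have [p Ey] := getl (t:=y) ltac:(by move: yL; rewrite inE); subst y.
have hq : inr q \in comp F (inl p) by rewrite inE.
have := mixed (inlS p) (comp_self (inl p)) hq.
move=> h; exfalso; move: yM; rewrite inE.
by case/orP: h => /andP[-> h]; rewrite inE csym in h; rewrite h ?orbT.
Qed.

Lemma count_D : 3 %| #|L :\: M|.
Proof.
apply: (count3 Fsym) => y yD.
have -> : [set t in L :\: M | connect F y t] = comp F y.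
  apply/setP=> t; rewrite inE [in RHS]inE; apply/andb_idl => cyt; exact: D_closed cyt.
apply: comp3; apply: inL_S; by case/setDP: yD.
Qed.

Lemma side_card p q : F (inl p) (inr q) -> 0 < #|L :&: comp F (inl p)| < 3.
Proof.
move=> Fpq; rewrite -(comp3 (inlS p)); apply/andP; split.
  by apply/card_gt0P; exists (inl p); rewrite !inE connect0.
apply: proper_card; rewrite properE subsetIr /=.
apply/negP => /subsetP /(_ (inr q)); rewrite !inE connect1 //.
by move/(_ isT).
Qed.

Lemma a2_notin : c1 -> c2 -> inl a2 \notin comp F (inl a1).
Proof.
move=> h1 h2; apply/negP => h.
have E : comp F (inl a2) = comp F (inl a1) := comp_eq h.
have hb1 : inr b1 \in comp F (inl a1) := compF h1.
have hb2 : inr b2 \in comp F (inl a1) by rewrite -E; exact: compF h2.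
have := cardsID L (comp F (inl a1)); rewrite comp3 ?inlS //.
have s1 : [set (inl a1 : TA + TB); inl a2] \subset comp F (inl a1) :&: L.
  apply/subsetP => t; rewrite !inE.
  have h' : connect F (inl a1) (inl a2) by move: h; rewrite inE.
  by case/orP => /eqP->; rewrite /= ?connect0 ?h'.
have s2 : [set (inr b1 : TA + TB); inr b2] \subset comp F (inl a1) :\: L.
  apply/subsetP => t; rewrite !inE.
  by case/orP => /eqP->; rewrite /=; [move: hb1|move: hb2]; rewrite inE.
have := subset_leq_card s1; have := subset_leq_card s2.
rewrite !cards2 !(inj_eq (@inl_inj _ _)) !(inj_eq (@inr_inj _ _)) ha hb /=.
lia.
Qed.

Lemma disj : c1 -> c2 -> forall t, t \in comp F (inl a1) -> t \in comp F (inl a2) -> False.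
Proof.
move=> h1 h2 t t1 t2.
have := a2_notin h1 h2; rewrite -(comp_eq t1) (comp_eq t2) comp_self.
by [].
Qed.

Lemma main_cases : 3 %| #|TA| ->
  (~~ c1 && ~~ c2) \/
  (c1 && c2 && (#|L :&: comp F (inl a1)| == 2) && (#|L :&: comp F (inl a2)| == 1)) \/
  (c1 && c2 && (#|L :&: comp F (inl a1)| == 1) && (#|L :&: comp F (inl a2)| == 2)).
Proof.
move=> h3.
have hLM : 3 %| #|L :&: M|.
  by rewrite -(dvdn_addl _ count_D) cardsID card_Lset.
case: (boolP c1) => h1; case: (boolP c2) => h2; last by left; apply/andP.
- rewrite /=.
  have EE : L :&: M = (L :&: comp F (inl a1)) :|: (L :&: comp F (inl a2)).
    by apply/setP=> t; rewrite !inE h1 h2 /= andb_orr.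
  rewrite EE cardsU in hLM.
  have EE2 : (L :&: comp F (inl a1)) :&: (L :&: comp F (inl a2)) = set0.
    apply/eqP; rewrite -subset0; apply/subsetP => t; rewrite !inE.
    by case/andP => /andP[_ u1] /andP[_ u2]; case: (disj h1 h2 (t:=t)); rewrite inE.
  rewrite EE2 cards0 subn0 in hLM.
  right; move: hLM (side_card h1) (side_card h2).
  move: (#|L :&: comp F (inl a1)|) (#|L :&: comp F (inl a2)|) => n1 n2; lia.
- have EE : L :&: M = L :&: comp F (inl a1).
    by apply/setP=> t; rewrite !inE h1 (negbTE h2) /= orbF.
  rewrite EE in hLM.
  move: hLM (side_card h1); move: (#|L :&: comp F (inl a1)|) => n1; lia.
- have EE : L :&: M = L :&: comp F (inl a2).
    by apply/setP=> t; rewrite !inE h2 (negbTE h1) /=.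
  rewrite EE in hLM.
  move: hLM (side_card h2); move: (#|L :&: comp F (inl a2)|) => n1; lia.
Qed.

Lemma caseB : ~~ c1 -> ~~ c2 -> exists FB, is_Lambda_factor eB [set~ x] FB /\ ~~ FB b1 b2.
Proof.
move=> h1 h2.
have nocross : forall p q, F (inl p) (inr q) = false.
  move=> p q; apply/negP => h; have := FX h.
  case/orP => /andP[/eqP ep /eqP eq]; move: h; rewrite ep eq => h.
  - by rewrite /c1 h in h1.
  - by rewrite /c2 h in h2.
have side : forall t y, F t y -> isl t = isl y.
  move=> [p|q] [p'|q'] //=; first by rewrite nocross.
  by rewrite Fsym nocross.
have cl : closed F [pred t | isl t].
  by move=> a b h; rewrite !inE /=; apply: side.
exists (fun p q => F (inr p) (inr q)); split; last first.
  by apply/negP => /Fe /and3P[h _ _]; move: eRb; rewrite h.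
apply: factor_of_local.
- by move=> p q; apply: Fsym.
- move=> p q /Fe /and3P[h hp hq]; rewrite !inE /= in hp hq; by rewrite eR // !inE hp hq.
- move=> v vx.
  have vS : (inr v : TA + TB) \in S by rewrite !inE (inj_eq (@inr_inj _ _)); rewrite !inE in vx.
  have [u [w [z [P C]]]] := loc vS.
  have sr : forall t, t \in [set u; w; z] -> exists q, t = inr q.
    move=> t; rewrite -C inE => ct; apply: getr.
    by move: (closed_connect cl ct); rewrite !inE /= => <-.
  have [u' Eu] := sr u ltac:(by rewrite !inE eqxx).
  have [w' Ew] := sr w ltac:(by rewrite !inE eqxx orbT).
  have [z' Ez] := sr z ltac:(by rewrite !inE eqxx !orbT).
  subst u w z.
  exists u', w', z'; split.
    by apply: (P3_map (f := inr)) P => //; move=> ? ? [].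
  have := comp_self (inr v); rewrite C !inE /=; by [].
Qed.

Hypothesis eAsym : symmetric eA.
Hypothesis eAa : eA a1 a2.

Lemma caseA : c1 -> c2 -> #|L :&: comp F (inl a1)| = 2 -> #|L :&: comp F (inl a2)| = 1 ->
  exists FA, is_Lambda_factor eA [set: TA] FA /\ FA a1 a2.
Proof.
move=> h1 h2 n1 n2.
have a1in : inl a1 \in L :&: comp F (inl a1) by rewrite !inE connect0.
have a2in : inl a2 \in L :&: comp F (inl a2) by rewrite !inE connect0.
have : #|(L :&: comp F (inl a1)) :\ inl a1| == 1.
  by move: n1; rewrite (cardsD1 (inl a1)) a1in /=; lia.
case/cards1P => t Et.
have tL : t \in L :&: comp F (inl a1) by have : t \in [set t] := set11 t; rewrite -Et => /setD1P[].
have [a' Ea'] := getl (t:=t) ltac:(by move: tL; rewrite !inE => /andP[]).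
subst t.
have a'C1 : inl a' \in comp F (inl a1) by move: tL; rewrite inE => /andP[].
have a'a1 : a' != a1.
  by have := set11 (inl a' : TA + TB); rewrite -Et => /setD1P[]; rewrite (inj_eq (@inl_inj _ _)).
have char1 : forall y, inl y \in comp F (inl a1) -> y = a1 \/ y = a'.
  move=> y hy; case: (eqVneq y a1) => [->|ya1]; [by left|right].
  have : inl y \in (L :&: comp F (inl a1)) :\ inl a1.
    by rewrite in_setD1 (inj_eq (@inl_inj _ _)) ya1 in_setI hy inE.
  by rewrite Et inE => /eqP [].
have : #|L :&: comp F (inl a2)| == 1 by rewrite n2.
case/cards1P => t2 Et2.
have char2 : forall y, inl y \in comp F (inl a2) -> y = a2.
  move=> y hy; have : inl y \in L :&: comp F (inl a2) by rewrite in_setI hy inE.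
  rewrite Et2 inE => /eqP Ey; move: a2in; rewrite Et2 inE -Ey => /eqP [].
  done.
have a'a2 : a' != a2.
  by apply/eqP => E; move: (a2_notin h1 h2); rewrite -E a'C1.
have Ca' : comp F (inl a') = comp F (inl a1) := comp_eq a'C1.
have Fa'a1 : F (inl a') (inl a1).
  have [t Ft] := has_nb (inlS a').
  have := compF Ft; rewrite Ca'.
  case: t Ft => [y|q] Ft.
  - by case/char1 => E; subst y => //; rewrite Firr in Ft.
  - move=> _; have := FX Ft; rewrite (negbTE a'a1) (negbTE a'a2) //.
have nb1 : forall y, F (inl a1) (inl y) -> y = a'.
  move=> y Fy; case: (char1 _ (compF Fy)) => // E; subst y; by rewrite Firr in Fy.
have nba' : forall y, F (inl a') (inl y) -> y = a1.
  move=> y Fy; have := compF Fy; rewrite Ca' => /char1 [] // E; subst y; by rewrite Firr in Fy.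
have nb2 : forall y, F (inl a2) (inl y) -> False.
  move=> y Fy; have E := char2 _ (compF Fy); subst y; by rewrite Firr in Fy.
pose FA := fun p q => [|| F (inl p) (inl q), (p == a1) && (q == a2) | (p == a2) && (q == a1)].
exists FA; split; last by rewrite /FA !eqxx orbT.
have FAsym : symmetric FA.
  move=> p q; rewrite /FA Fsym; congr orb; rewrite orbC; congr orb; apply: andbC.
apply: factor_of_local => //.
- move=> p q /or3P[/Fe/and3P[/eL h _ _]|/andP[/eqP-> /eqP->]|/andP[/eqP-> /eqP->]];
  by rewrite !inE ?h ?eAa // eAsym eAa.
- move=> v _.
  case: (boolP (v \in [:: a'; a1; a2])) => hv.
    exists a', a1, a2; split; last by move: hv; rewrite !inE orbA.
    split.
    + by rewrite a'a1 a'a2 ha.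
    + by rewrite /FA Fa'a1.
    + by rewrite /FA !eqxx orbT.
    + rewrite /FA (negbTE a'a1) (negbTE a'a2) /= orbF.
      by apply/negP => /nba' E; move: ha; rewrite E eqxx.
    + move=> y; split; [|split]; rewrite /FA.
      * case/or3P => [/nba'//|/andP[/eqP E _]|/andP[/eqP E _]].
        - by move: a'a1; rewrite E eqxx.
        - by move: a'a2; rewrite E eqxx.
      * case/or3P => [/nb1 E|/andP[_ /eqP E]|/andP[/eqP E _]].
        - by left.
        - by right.
        - by move: ha; rewrite E eqxx.
      * case/or3P => [/nb2 //|/andP[/eqP E _]|/andP[_ /eqP] //].
        by move: ha; rewrite E eqxx.
  have vD : inl v \in L :\: M.
    rewrite !inE /= andbT h1 h2 /=; apply/negP => /orP[cv|cv].
    + case: (char1 v ltac:(by rewrite inE)) => E; move: hv; rewrite E !inE eqxx ?orbT //.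
    + move: hv; rewrite (char2 v ltac:(by rewrite inE)) !inE eqxx !orbT //.
  have [u [w [z [P C]]]] := loc (inlS v).
  have inD : forall t, t \in [set u; w; z] -> t \in L :\: M.
    move=> t; rewrite -C inE; exact: D_closed vD.
  have sl : forall t, t \in [set u; w; z] -> exists q, t = inl q.
    move=> t /inD /setDP [tL0 _]; apply: getl; by move: tL0; rewrite inE.
  have a1M : inl a1 \in M by rewrite inE h1 connect0.
  have a2M : inl a2 \in M by rewrite inE h2 connect0 orbT.
  have Hu : u \in [set u; w; z] by rewrite !inE eqxx.
  have Hw : w \in [set u; w; z] by rewrite !inE eqxx orbT.
  have Hz : z \in [set u; w; z] by rewrite !inE eqxx !orbT.
  have [u' Eu] := sl u Hu.
  have [w' Ew] := sl w Hw.
  have [z' Ez] := sl z Hz.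
  subst u w z.
  exists u', w', z'; split; last first.
    have := comp_self (inl v); rewrite C !inE /=; by [].
  apply: (P3_map (f := inl)) P; first by move=> ? ? [].
  move=> t y ht.
  have htD : inl t \in L :\: M.
    by apply: inD; move: ht; rewrite !inE !(inj_eq (@inl_inj _ _)) orbA.
  have ta1 : t != a1 by apply/eqP => E; move: htD; rewrite E inE a1M.
  have ta2 : t != a2 by apply/eqP => E; move: htD; rewrite E inE a2M.
  by rewrite /FA (negbTE ta1) (negbTE ta2) /= orbF.
Qed.

End Main.

Theorem mainTheorem11 (TA TB : finType) (eA : rel TA) (eB : rel TB)
  (a1 a2 : TA) (b1 b2 : TB) (x : TB) :
  simple_graph eA -> simple_graph eB -> cubic eA -> cubic eB ->
  #|TA| %% 6 = 0 -> #|TB| %% 6 = 4 ->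
  eA a1 a2 -> eB b1 b2 ->
  ~ (exists F, is_Lambda_factor eA [set: TA] F /\ F a1 a2) ->
  ~ (exists F, is_Lambda_factor eB [set~ x] F /\ ~~ F b1 b2) ->
  #|{: TA + TB}| %% 6 = 4 /\
  ~ (exists F, is_Lambda_factor (join_graph eA eB a1 a2 b1 b2) [set~ inr x] F).
Proof.
move=> [Asym Airr] [Bsym Birr] _ _ hA hB ha12 hb12 nA nB; split.
  rewrite card_sum; lia.
move=> [F FL].
set e := join_graph eA eB a1 a2 b1 b2 in FL.
have eirr : irreflexive e by move=> [p|q]; rewrite /e /join_graph ?Airr ?Birr.
have eL : forall p q, e (inl p) (inl q) -> eA p q by move=> p q /andP[].
have eR : forall p q, e (inr p) (inr q) -> eB p q by move=> p q /andP[].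
have eRb : ~~ e (inr b1) (inr b2) by rewrite /e /join_graph !eqxx /= andbF.
have eRb' : ~~ e (inr b2) (inr b1) by rewrite /e /join_graph !eqxx /= orbT andbF.
have eX : forall p q, e (inl p) (inr q) -> ((p == a1) && (q == b1)) || ((p == a2) && (q == b2)) by [].
have eX' : forall p q, e (inl p) (inr q) -> ((p == a2) && (q == b2)) || ((p == a1) && (q == b1)).
  by move=> p q; rewrite orbC.
have ha : a1 != a2 by apply/eqP => E; move: ha12; rewrite E Airr.
have hb : b1 != b2 by apply/eqP => E; move: hb12; rewrite E Birr.
have h3 : 3 %| #|TA| by lia.
case: (main_cases eirr eRb eX ha hb FL h3) =>
  [/andP[n1 n2]|[/andP[/andP[/andP[k1 k2] /eqP m1] /eqP m2]|/andP[/andP[/andP[k1 k2] /eqP m1] /eqP m2]]].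
- apply: nB. by have := caseB eirr eR eRb eX FL; apply.
- apply: nA. by have := caseA eirr eL eRb eX ha hb FL Asym ha12; apply.
- have ha' : a2 != a1 by rewrite eq_sym.
  have hb' : b2 != b1 by rewrite eq_sym.
  have ha21 : eA a2 a1 by rewrite Asym.
  have [FA [FAL FA21]] := caseA eirr eL eRb' eX' ha' hb' FL Asym ha21 k2 k1 m2 m1.
  apply: nA; exists FA; split => //; case: FAL => FAsym _; by rewrite FAsym.
Qed.
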